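(* Let $M,N$ be $L$-structures with $M\equiv N$ (affine elementary equivalence), and assume both are $\aleph_0$-saturated in the affine sense. Then $M$ and $N$ are elementarily equivalent in full continuous logic, i.e. they assign the same value to every CL-sentence.
   Context: Affine continuous logic over a Lipschitz language $L$: structures are complete metric spaces of diameter $\le1$ with Lipschitz interpretations; affine formulas are built from atomic $1,d(t_1,t_2),R(\bar t)$ by $+$, real scalars, $\sup$, $\inf$; CL-formulas additionally allow the connectives $\wedge$ (min) and $\vee$ (max). $M\equiv N$ means $\sigma^M=\sigma^N$ for all affine sentences. For $A\subseteq M$, a type over $A$ is a positive linear functional $p$ with $p(1)=1$ on the space of affine formulas $\phi(\bar x)$ with parameters from $A$, identified when they take the same values on $M$; $\bar b$ realizes $p$ if $p(\phi)=\phi^M(\bar b)$ for all such $\phi$. $M$ is $\aleph_0$-saturated if for every finite $A\subseteq M$ every 1-type over $A$ is realized in $M$. *)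

(* Defs.v *)
From Stdlib Require Import Reals.
From Stdlib Require Fin.
From Coquelicot Require Import Coquelicot.
Open Scope R_scope.

Record language := {
  func : Type;
  farity : func -> nat;
  flip : func -> R;
  flip_nonneg : forall f, 0 <= flip f;
  rel : Type;
  rarity : rel -> nat;
  rlip : rel -> R;
  rlip_nonneg : forall r, 0 <= rlip r
}.

Record structure (L : language) := {
  carrier :> Type;
  dist : carrier -> carrier -> R;
  carrier_inhabited : inhabited carrier;
  dist_refl : forall x, dist x x = 0;
  dist_sep : forall x y, dist x y = 0 -> x = y;
  dist_sym : forall x y, dist x y = dist y x;
  dist_tri : forall x y z, dist x z <= dist x y + dist y z;
  dist_diam : forall x y, dist x y <= 1;
  dist_complete : forall u : nat -> carrier,
    (forall eps, 0 < eps -> exists N, forall m n, (N <= m)%nat -> (N <= n)%nat ->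
        dist (u m) (u n) < eps) ->
    exists x, forall eps, 0 < eps -> exists N, forall n, (N <= n)%nat -> dist (u n) x < eps;
  ifun : forall f : func L, (Fin.t (farity L f) -> carrier) -> carrier;
  ifun_lip : forall f x y delta,
    (forall i, dist (x i) (y i) <= delta) -> dist (ifun f x) (ifun f y) <= flip L f * delta;
  irel : forall r : rel L, (Fin.t (rarity L r) -> carrier) -> R;
  irel_lip : forall r x y delta,
    (forall i, dist (x i) (y i) <= delta) -> Rabs (irel r x - irel r y) <= rlip L r * delta
}.
Arguments dist {L} _ _ _.
Arguments ifun {L} _ _ _.
Arguments irel {L} _ _ _.

(** * Syntax. Variables are de Bruijn indices (nat); [C] is a type of
    parameter (constant) names. *)
Inductive term (L : language) (C : Type) : Type :=
| TVar : nat -> term L C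
| TCst : C -> term L C
| TApp : forall f : func L, (Fin.t (farity L f) -> term L C) -> term L C.
Arguments TVar {L C} _.
Arguments TCst {L C} _.
Arguments TApp {L C} _ _.

(** CL-formulas; affine formulas are those without [FMin]/[FMax].
    [FSup phi] / [FInf phi] bind de Bruijn variable 0 of [phi]. *)
Inductive formula (L : language) (C : Type) : Type :=
| FOne : formula L C
| FDist : term L C -> term L C -> formula L C
| FRel : forall r : rel L, (Fin.t (rarity L r) -> term L C) -> formula L C
| FAdd : formula L C -> formula L C -> formula L C
| FScale : R -> formula L C -> formula L C
| FSup : formula L C -> formula L C
| FInf : formula L C -> formula L C
| FMin : formula L C -> formula L C -> formula L C
| FMax : formula L C -> formula L C -> formula L C.
Arguments FOne {L C}.
Arguments FDist {L C} _ _.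
Arguments FRel {L C} _ _.
Arguments FAdd {L C} _ _.
Arguments FScale {L C} _ _.
Arguments FSup {L C} _.
Arguments FInf {L C} _.
Arguments FMin {L C} _ _.
Arguments FMax {L C} _ _.

Fixpoint affine {L C} (phi : formula L C) : Prop :=
  match phi with
  | FOne | FDist _ _ | FRel _ _ => True
  | FAdd p q => affine p /\ affine q
  | FScale _ p | FSup p | FInf p => affine p
  | FMin _ _ | FMax _ _ => False
  end.

Fixpoint tfv_below {L C} (n : nat) (t : term L C) : Prop :=
  match t with
  | TVar i => (i < n)%nat
  | TCst _ => True
  | TApp f args => forall i, tfv_below n (args i)
  end.

Fixpoint fv_below {L C} (n : nat) (phi : formula L C) : Prop :=
  match phi with
  | FOne => True
  | FDist s t => tfv_below n s /\ tfv_below n t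
  | FRel r args => forall i, tfv_below n (args i)
  | FAdd p q | FMin p q | FMax p q => fv_below n p /\ fv_below n q
  | FScale _ p => fv_below n p
  | FSup p | FInf p => fv_below (S n) p
  end.

Definition scons {M : Type} (a : M) (e : nat -> M) : nat -> M :=
  fun i => match i with O => a | S j => e j end.

Definition Rsup (S : R -> Prop) : R := real (Lub_Rbar S).
Definition Rinf (S : R -> Prop) : R := real (Glb_Rbar S).

Fixpoint teval {L C} (M : structure L) (k : C -> M) (e : nat -> M) (t : term L C) : M :=
  match t with
  | TVar i => e i
  | TCst c => k c
  | TApp f args => ifun M f (fun i => teval M k e (args i))
  end.

Fixpoint eval {L C} (M : structure L) (k : C -> M) (e : nat -> M) (phi : formula L C) : R :=
  match phi with
  | FOne => 1
  | FDist s t => dist M (teval M k e s) (teval M k e t)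
  | FRel r args => irel M r (fun i => teval M k e (args i))
  | FAdd p q => eval M k e p + eval M k e q
  | FScale c p => c * eval M k e p
  | FSup p => Rsup (fun v => exists b : M, v = eval M k (scons b e) p)
  | FInf p => Rinf (fun v => exists b : M, v = eval M k (scons b e) p)
  | FMin p q => Rmin (eval M k e p) (eval M k e q)
  | FMax p q => Rmax (eval M k e p) (eval M k e q)
  end.

Definition no_params (M : Type) : Empty_set -> M := fun c => match c with end.

Definition sentence {L} (s : formula L Empty_set) : Prop := fv_below 0 s.

(** Affine elementary equivalence M ≡ N (the value of a sentence does not
    depend on the environment, which is quantified over). *)
Definition affine_equiv {L} (M N : structure L) : Prop :=
  forall s : formula L Empty_set, affine s -> sentence s ->
    forall (eM : nat -> M) (eN : nat -> N),
      eval M (no_params M) eM s = eval N (no_params N) eN s.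

Definition CL_equiv {L} (M N : structure L) : Prop :=
  forall s : formula L Empty_set, sentence s ->
    forall (eM : nat -> M) (eN : nat -> N),
      eval M (no_params M) eM s = eval N (no_params N) eN s.

(** A finite parameter set A ⊆ M is given as a tuple [a : Fin.t n -> M];
    formulas with parameters from A are formulas over constants [Fin.t n].
    An affine formula φ(x) in one variable x has free variables below 1
    (x is de Bruijn variable 0); its value at b is [eval M a (fun _ => b) φ]. *)
Definition one_var_affine {L n} (phi : formula L (Fin.t n)) : Prop :=
  affine phi /\ fv_below 1 phi.

Definition fval {L n} (M : structure L) (a : Fin.t n -> M) (phi : formula L (Fin.t n)) (b : M) : R :=
  eval M a (fun _ => b) phi.

(** A 1-type over A: a positive linear functional with p(1)=1 on the space of
    affine formulas φ(x) with parameters from A modulo equality of values on M;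
    represented as a function on formulas that respects that identification. *)
Definition is_1type {L n} (M : structure L) (a : Fin.t n -> M)
    (p : formula L (Fin.t n) -> R) : Prop :=
  (forall phi psi, one_var_affine phi -> one_var_affine psi ->
     (forall b, fval M a phi b = fval M a psi b) -> p phi = p psi) /\
  (forall phi psi, one_var_affine phi -> one_var_affine psi ->
     p (FAdd phi psi) = p phi + p psi) /\
  (forall c phi, one_var_affine phi -> p (FScale c phi) = c * p phi) /\
  (forall phi, one_var_affine phi -> (forall b, 0 <= fval M a phi b) -> 0 <= p phi) /\
  p FOne = 1.

Definition realizes {L n} (M : structure L) (a : Fin.t n -> M)
    (p : formula L (Fin.t n) -> R) (b : M) : Prop :=
  forall phi, one_var_affine phi -> p phi = fval M a phi b.

Definition aleph0_saturated {L} (M : structure L) : Prop :=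
  forall (n : nat) (a : Fin.t n -> M) (p : formula L (Fin.t n) -> R),
    is_1type M a p -> exists b : M, realizes M a p b.

(* Main.v *)
Require Import Defs.
From Stdlib Require Import Reals Lra Lia FunctionalExtensionality.
From Stdlib Require Fin.
From Coquelicot Require Import Coquelicot.
Require Import Defs.
Open Scope R_scope.

Definition fn {n} (i : Fin.t n) : nat := proj1_sig (Fin.to_nat i).

Fixpoint fin_of (p n : nat) {struct n} : option (Fin.t n) :=
  match n with
  | O => None
  | S n' => match p with
            | O => Some Fin.F1
            | S p' => match fin_of p' n' with
                      | Some f => Some (Fin.FS f)
                      | None => None end end end.

Lemma fn_FS n (f : Fin.t n) : fn (Fin.FS f) = S (fn f).
Proof. unfold fn; simpl. destruct (Fin.to_nat f); reflexivity. Qed.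

Lemma fin_of_spec p n f : fin_of p n = Some f -> fn f = p.
Proof.
  revert p f; induction n as [|n IH]; intros p f H; simpl in H; [discriminate|].
  destruct p as [|p].
  - injection H as <-. reflexivity.
  - destruct (fin_of p n) eqn:E; [|discriminate].
    injection H as <-. rewrite fn_FS. f_equal; auto.
Qed.

Lemma fin_of_lt p n : (p < n)%nat -> exists f, fin_of p n = Some f.
Proof.
  revert p; induction n as [|n IH]; intros p H; [lia|]. simpl.
  destruct p as [|p]; [eauto|].
  destruct (IH p ltac:(lia)) as [f Hf]; rewrite Hf; eauto.
Qed.

Lemma dist_nonneg {L} (X : structure L) x y : 0 <= dist X x y.
Proof.
  pose proof (dist_tri L X x y x). rewrite dist_refl in H. rewrite (dist_sym L X y x) in H. lra.
Qed.

Lemma Rsup_bounded (S : R -> Prop) B : (exists v, S v) -> (forall v, S v -> Rabs v <= B) ->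
  (forall v, S v -> v <= Rsup S) /\ Rabs (Rsup S) <= B.
Proof.
  intros [v0 Hv0] HB. unfold Rsup. destruct (Lub_Rbar_correct S) as [Hub Hl].
  assert (Hle : Rbar_le (Lub_Rbar S) B).
  { apply Hl. intros x Hx. simpl. specialize (HB x Hx). apply Rabs_le_between in HB. lra. }
  assert (H0 := Hub v0 Hv0).
  destruct (Lub_Rbar S) as [l| |]; simpl in *; try contradiction.
  split.
  - intros v Hv. exact (Hub v Hv).
  - specialize (HB v0 Hv0). apply Rabs_le_between in HB. apply Rabs_le. lra.
Qed.

Lemma Rinf_bounded (S : R -> Prop) B : (exists v, S v) -> (forall v, S v -> Rabs v <= B) ->
  (forall v, S v -> Rinf S <= v) /\ Rabs (Rinf S) <= B.
Proof.
  intros [v0 Hv0] HB. unfold Rinf. destruct (Glb_Rbar_correct S) as [Hlb Hl].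
  assert (Hle : Rbar_le (-B) (Glb_Rbar S)).
  { apply Hl. intros x Hx. simpl. specialize (HB x Hx). apply Rabs_le_between in HB. lra. }
  assert (H0 := Hlb v0 Hv0).
  destruct (Glb_Rbar S) as [l| |]; simpl in *; try contradiction.
  split.
  - intros v Hv. exact (Hlb v Hv).
  - specialize (HB v0 Hv0). apply Rabs_le_between in HB. apply Rabs_le. lra.
Qed.

Lemma Rsup_le0 (S : R -> Prop) : (forall v, S v -> v <= 0) -> Rsup S <= 0.
Proof.
  intros H. unfold Rsup. destruct (Lub_Rbar_correct S) as [_ Hl].
  assert (Hle : Rbar_le (Lub_Rbar S) 0) by (apply Hl; intros x Hx; simpl; auto).
  destruct (Lub_Rbar S); simpl in *; lra.
Qed.

Lemma eval_bounded {L C} (X : structure L) (k : C -> X) (phi : formula L C) :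
  exists B, forall e, Rabs (eval X k e phi) <= B.
Proof.
  induction phi as [| s t | r args | p IHp q IHq | c p IHp | p IHp | p IHp | p IHp q IHq | p IHp q IHq].
  - exists 1. intros; simpl. rewrite Rabs_R1; lra.
  - exists 1. intros; simpl. rewrite Rabs_pos_eq by apply dist_nonneg. apply dist_diam.
  - destruct (carrier_inhabited L X) as [x0].
    exists (Rabs (irel X r (fun _ => x0)) + rlip L r). intros e; simpl.
    pose proof (irel_lip L X r (fun i => teval X k e (args i)) (fun _ => x0) 1
      (fun i => dist_diam L X _ _)).
    pose proof (Rabs_triang_inv (irel X r (fun i => teval X k e (args i))) (irel X r (fun _ => x0))).
    lra.
  - destruct IHp as [B1 H1], IHq as [B2 H2]. exists (B1 + B2). intros e; simpl.
    eapply Rle_trans; [apply Rabs_triang|]. specialize (H1 e); specialize (H2 e); lra.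
  - destruct IHp as [B1 H1]. exists (Rabs c * B1). intros e; simpl.
    rewrite Rabs_mult. apply Rmult_le_compat_l; [apply Rabs_pos|auto].
  - destruct IHp as [B1 H1]. exists B1. intros e; simpl.
    destruct (carrier_inhabited L X) as [x0].
    apply (Rsup_bounded _ B1).
    + eexists; exists x0; reflexivity.
    + intros v [b ->]; auto.
  - destruct IHp as [B1 H1]. exists B1. intros e; simpl.
    destruct (carrier_inhabited L X) as [x0].
    apply (Rinf_bounded _ B1).
    + eexists; exists x0; reflexivity.
    + intros v [b ->]; auto.
  - destruct IHp as [B1 H1], IHq as [B2 H2]. exists (B1 + B2). intros e; simpl.
    specialize (H1 e); specialize (H2 e).
    pose proof (Rabs_pos (eval X k e p)); pose proof (Rabs_pos (eval X k e q)).
    unfold Rmin; destruct Rle_dec; lra.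
  - destruct IHp as [B1 H1], IHq as [B2 H2]. exists (B1 + B2). intros e; simpl.
    specialize (H1 e); specialize (H2 e).
    pose proof (Rabs_pos (eval X k e p)); pose proof (Rabs_pos (eval X k e q)).
    unfold Rmax; destruct Rle_dec; lra.
Qed.

Lemma scons_agree {X : Type} m (e e' : nat -> X) b :
  (forall j, (j < m)%nat -> e j = e' j) -> forall j, (j < S m)%nat -> scons b e j = scons b e' j.
Proof. intros H [|j] Hj; simpl; auto. apply H; lia. Qed.

Lemma teval_agree {L C} (X : structure L) (k : C -> X) m (t : term L C) e e' :
  tfv_below m t -> (forall j, (j < m)%nat -> e j = e' j) -> teval X k e t = teval X k e' t.
Proof.
  induction t as [j|c|f args IH]; simpl; intros Hfv Hag; auto.
  f_equal. apply functional_extensionality; intro i. auto.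
Qed.

Lemma eval_agree {L C} (X : structure L) (k : C -> X) (phi : formula L C) :
  forall m e e', fv_below m phi -> (forall j, (j < m)%nat -> e j = e' j) ->
  eval X k e phi = eval X k e' phi.
Proof.
  induction phi as [| s t | r args | p IHp q IHq | c p IHp | p IHp | p IHp | p IHp q IHq | p IHp q IHq];
    intros m e e' Hfv Hag; simpl in *.
  - reflexivity.
  - destruct Hfv. f_equal; eapply teval_agree; eauto.
  - f_equal. apply functional_extensionality; intro i. eapply teval_agree; eauto.
  - destruct Hfv. f_equal; eauto.
  - f_equal; eauto.
  - unfold Rsup; f_equal; apply Lub_Rbar_eqset; intro v; split; intros [b Hb]; exists b;
      rewrite Hb; eapply IHp; eauto; [apply scons_agree; auto | apply scons_agree; intros; symmetry; auto].
  - unfold Rinf; f_equal; apply Glb_Rbar_eqset; intro v; split; intros [b Hb]; exists b;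
      rewrite Hb; eapply IHp; eauto; [apply scons_agree; auto | apply scons_agree; intros; symmetry; auto].
  - destruct Hfv. f_equal; eauto.
  - destruct Hfv. f_equal; eauto.
Qed.

Fixpoint tT {L n} (m : nat) (t : term L (Fin.t n)) : term L Empty_set :=
  match t with
  | TVar j => TVar j
  | TCst i => TVar (m + fn i)
  | TApp f args => TApp f (fun i => tT m (args i))
  end.

Fixpoint fT {L n} (m : nat) (phi : formula L (Fin.t n)) : formula L Empty_set :=
  match phi with
  | FOne => FOne
  | FDist s t => FDist (tT m s) (tT m t)
  | FRel r args => FRel r (fun i => tT m (args i))
  | FAdd p q => FAdd (fT m p) (fT m q)
  | FScale c p => FScale c (fT m p)
  | FSup p => FSup (fT (S m) p)
  | FInf p => FInf (fT (S m) p)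
  | FMin p q => FMin (fT m p) (fT m q)
  | FMax p q => FMax (fT m p) (fT m q)
  end.

Lemma fT_affine {L n} (phi : formula L (Fin.t n)) m : affine phi -> affine (fT m phi).
Proof.
  revert m; induction phi; intros m H; simpl in *; try tauto; auto.
  destruct H; split; auto.
Qed.

Lemma tT_fv {L n} (t : term L (Fin.t n)) m : tfv_below m t -> tfv_below (m + n) (tT m t).
Proof.
  induction t as [j|c|f args IH]; simpl; intros H; auto.
  - lia.
  - unfold fn. destruct (Fin.to_nat c); simpl; lia.
Qed.

Lemma fT_fv {L n} (phi : formula L (Fin.t n)) m : fv_below m phi -> fv_below (m + n) (fT m phi).
Proof.
  revert m; induction phi; intros m H; simpl in *; try tauto;
    try (destruct H; split); auto using tT_fv.
  - apply (IHphi (S m)); auto.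
  - apply (IHphi (S m)); auto.
Qed.

Lemma tT_eval {L n} (X : structure L) (a : Fin.t n -> X) (t : term L (Fin.t n)) m e e0 :
  tfv_below m t -> (forall j, (j < m)%nat -> e j = e0 j) -> (forall i, e (m + fn i)%nat = a i) ->
  teval X (no_params X) e (tT m t) = teval X a e0 t.
Proof.
  induction t as [j|c|f args IH]; simpl; intros Hfv Hag Ha; auto.
  f_equal. apply functional_extensionality; intro i. auto.
Qed.

Lemma fT_eval {L n} (X : structure L) (a : Fin.t n -> X) (phi : formula L (Fin.t n)) :
  forall m e e0, fv_below m phi -> (forall j, (j < m)%nat -> e j = e0 j) ->
  (forall i, e (m + fn i)%nat = a i) ->
  eval X (no_params X) e (fT m phi) = eval X a e0 phi.
Proof.
  induction phi as [| s t | r args | p IHp q IHq | c p IHp | p IHp | p IHp | p IHp q IHq | p IHp q IHq];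
    intros m e e0 Hfv Hag Ha; simpl in *.
  - reflexivity.
  - destruct Hfv. f_equal; eapply tT_eval; eauto.
  - f_equal. apply functional_extensionality; intro i. eapply tT_eval; eauto.
  - destruct Hfv. f_equal; eauto.
  - f_equal; eauto.
  - unfold Rsup; f_equal; apply Lub_Rbar_eqset; intro v; split; intros [b Hb]; exists b;
      rewrite Hb; [|symmetry]; apply (IHp (S m)); auto; apply scons_agree; auto.
  - unfold Rinf; f_equal; apply Glb_Rbar_eqset; intro v; split; intros [b Hb]; exists b;
      rewrite Hb; [|symmetry]; apply (IHp (S m)); auto; apply scons_agree; auto.
  - destruct Hfv. f_equal; eauto.
  - destruct Hfv. f_equal; eauto.
Qed.

Fixpoint tU {L} (n k : nat) (t : term L Empty_set) : term L (Fin.t n) :=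
  match t with
  | TVar j => if Nat.leb j k then TVar j else
              match fin_of (j - S k) n with Some i => TCst i | None => TVar j end
  | TCst c => match c with end
  | TApp f args => TApp f (fun i => tU n k (args i))
  end.

Fixpoint fU {L} (n k : nat) (phi : formula L Empty_set) : formula L (Fin.t n) :=
  match phi with
  | FOne => FOne
  | FDist s t => FDist (tU n k s) (tU n k t)
  | FRel r args => FRel r (fun i => tU n k (args i))
  | FAdd p q => FAdd (fU n k p) (fU n k q)
  | FScale c p => FScale c (fU n k p)
  | FSup p => FSup (fU n (S k) p)
  | FInf p => FInf (fU n (S k) p)
  | FMin p q => FMin (fU n k p) (fU n k q)
  | FMax p q => FMax (fU n k p) (fU n k q)
  end.

Lemma fU_affine {L} n (phi : formula L Empty_set) k : affine phi -> affine (fU n k phi).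
Proof.
  revert k; induction phi; intros k H; simpl in *; try tauto; auto.
  destruct H; split; auto.
Qed.

Lemma tU_fv {L} n (t : term L Empty_set) k : tfv_below (S k + n) t -> tfv_below (S k) (tU n k t).
Proof.
  induction t as [j|c|f args IH]; simpl; intros H; auto.
  - destruct (Nat.leb_spec j k); simpl; [lia|].
    destruct (fin_of (j - S k) n) eqn:E; simpl; auto.
    destruct (fin_of_lt (j - S k) n ltac:(lia)) as [f Hf]; congruence.
  - destruct c.
Qed.

Lemma fU_fv {L} n (phi : formula L Empty_set) k : fv_below (S k + n) phi -> fv_below (S k) (fU n k phi).
Proof.
  revert k; induction phi; intros k H; simpl in *; try tauto;
    try (destruct H; split); auto using tU_fv.
  all: apply (IHphi (S k)); auto.
Qed.

Lemma tU_eval {L n} (X : structure L) (a : Fin.t n -> X) (t : term L Empty_set) k e e0 :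
  tfv_below (S k + n) t -> (forall j, (j <= k)%nat -> e j = e0 j) ->
  (forall i, e (S k + fn i)%nat = a i) ->
  teval X a e0 (tU n k t) = teval X (no_params X) e t.
Proof.
  induction t as [j|c|f args IH]; simpl; intros Hfv Hag Ha.
  - destruct (Nat.leb_spec j k); simpl; [symmetry; auto|].
    destruct (fin_of (j - S k) n) eqn:E; simpl.
    + apply fin_of_spec in E. rewrite <- Ha, E. f_equal. lia.
    + destruct (fin_of_lt (j - S k) n ltac:(lia)) as [f Hf]; congruence.
  - destruct c.
  - f_equal. apply functional_extensionality; intro i. auto.
Qed.

Lemma scons_agree_le {X : Type} m (e e' : nat -> X) b :
  (forall j, (j <= m)%nat -> e j = e' j) -> forall j, (j <= S m)%nat -> scons b e j = scons b e' j.
Proof. intros H [|j] Hj; simpl; auto. apply H; lia. Qed.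

Lemma fU_eval {L n} (X : structure L) (a : Fin.t n -> X) (phi : formula L Empty_set) :
  forall k e e0, fv_below (S k + n) phi -> (forall j, (j <= k)%nat -> e j = e0 j) ->
  (forall i, e (S k + fn i)%nat = a i) ->
  eval X a e0 (fU n k phi) = eval X (no_params X) e phi.
Proof.
  induction phi as [| s t | r args | p IHp q IHq | c p IHp | p IHp | p IHp | p IHp q IHq | p IHp q IHq];
    intros k e e0 Hfv Hag Ha; simpl in *.
  - reflexivity.
  - destruct Hfv. f_equal; eapply tU_eval; eauto.
  - f_equal. apply functional_extensionality; intro i. eapply tU_eval; eauto.
  - destruct Hfv. f_equal; eauto.
  - f_equal; eauto.
  - unfold Rsup; f_equal; apply Lub_Rbar_eqset; intro v; split; intros [b Hb]; exists b;
      rewrite Hb; [|symmetry]; apply (IHp (S k)); auto; apply scons_agree_le; auto.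
  - unfold Rinf; f_equal; apply Glb_Rbar_eqset; intro v; split; intros [b Hb]; exists b;
      rewrite Hb; [|symmetry]; apply (IHp (S k)); auto; apply scons_agree_le; auto.
  - destruct Hfv. f_equal; eauto.
  - destruct Hfv. f_equal; eauto.
Qed.

Definition equivn {L} (X Y : structure L) n (eX : nat -> X) (eY : nat -> Y) :=
  forall chi : formula L Empty_set, affine chi -> fv_below n chi ->
    eval X (no_params X) eX chi = eval Y (no_params Y) eY chi.

Lemma equivn_sym {L} (X Y : structure L) n eX eY : equivn X Y n eX eY -> equivn Y X n eY eX.
Proof. intros H chi A F; symmetry; auto. Qed.

Lemma transfer_le {L} (X Y : structure L) n eX eY (H : equivn X Y n eX eY) (c : X)
  (psi : formula L (Fin.t n)) : one_var_affine psi ->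
  (forall b : Y, fval Y (fun i => eY (fn i)) psi b <= 0) -> fval X (fun i => eX (fn i)) psi c <= 0.
Proof.
  intros [Ha Hf] Hb.
  set (aX := fun i : Fin.t n => eX (fn i)). set (aY := fun i : Fin.t n => eY (fn i)).
  assert (A : affine (fT 0 (FSup psi))) by (apply fT_affine; exact Ha).
  assert (F : fv_below (0 + n) (fT 0 (FSup psi))) by (apply fT_fv; exact Hf).
  specialize (H _ A F).
  rewrite (fT_eval X aX (FSup psi) 0 eX eX) in H; [| exact Hf | intros; lia | intros; reflexivity].
  rewrite (fT_eval Y aY (FSup psi) 0 eY eY) in H; [| exact Hf | intros; lia | intros; reflexivity].
  simpl in H.
  assert (HY : Rsup (fun v => exists b, v = eval Y aY (scons b eY) psi) <= 0).
  { apply Rsup_le0. intros v [b ->].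
    rewrite (eval_agree Y aY psi 1 _ (fun _ => b)); [apply Hb | exact Hf |].
    intros [|j] Hj; simpl; auto; lia. }
  destruct (eval_bounded X aX psi) as [B HB].
  destruct (Rsup_bounded (fun v => exists b, v = eval X aX (scons b eX) psi) B) as [Hs _].
  - eexists; exists c; reflexivity.
  - intros v [b ->]; auto.
  - unfold fval. fold aX.
    rewrite (eval_agree X aX psi 1 (fun _ => c) (scons c eX)); [| exact Hf |].
    + specialize (Hs _ (ex_intro _ c eq_refl)). lra.
    + intros [|j] Hj; simpl; auto; lia.
Qed.

Lemma step {L} (X Y : structure L) (satY : aleph0_saturated Y) n eX eY
  (H : equivn X Y n eX eY) (c : X) : exists d, equivn X Y (S n) (scons c eX) (scons d eY).
Proof.
  set (aX := fun i : Fin.t n => eX (fn i)). set (aY := fun i : Fin.t n => eY (fn i)).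
  set (p := fun psi => fval X aX psi c).
  assert (T : is_1type Y aY p).
  { split; [|split; [|split; [|split]]].
    - intros phi psi Hphi Hpsi Heq. unfold p.
      assert (O1 : one_var_affine (FAdd phi (FScale (-1) psi)))
        by (destruct Hphi, Hpsi; split; simpl; tauto).
      assert (O2 : one_var_affine (FAdd psi (FScale (-1) phi)))
        by (destruct Hphi, Hpsi; split; simpl; tauto).
      assert (k1 : fval X aX (FAdd phi (FScale (-1) psi)) c <= 0).
      { apply (transfer_le X Y n eX eY H c _ O1). intro b.
        specialize (Heq b); unfold fval, aY in *; simpl; lra. }
      assert (k2 : fval X aX (FAdd psi (FScale (-1) phi)) c <= 0).
      { apply (transfer_le X Y n eX eY H c _ O2). intro b.
        specialize (Heq b); unfold fval, aY in *; simpl; lra. }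
      unfold fval in *; simpl in *.
      lra.
    - intros; reflexivity.
    - intros; reflexivity.
    - intros phi Hphi Hpos. unfold p.
      assert (O1 : one_var_affine (FScale (-1) phi)) by (destruct Hphi; split; simpl; tauto).
      assert (k1 : fval X aX (FScale (-1) phi) c <= 0).
      { apply (transfer_le X Y n eX eY H c _ O1). intro b.
        specialize (Hpos b); unfold fval, aY in *; simpl; lra. }
      unfold fval in *; simpl in *.
      lra.
    - reflexivity. }
  destruct (satY n aY p T) as [d Hd]. exists d.
  intros chi Ha Hf.
  assert (O : one_var_affine (fU n 0 chi)) by (split; [apply fU_affine; auto | apply fU_fv; exact Hf]).
  specialize (Hd _ O). unfold p, fval in Hd.
  rewrite (fU_eval X aX chi 0 (scons c eX) (fun _ => c)) in Hd;
    [| exact Hf | intros [|j] Hj; simpl; auto; lia | intros; reflexivity].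
  rewrite (fU_eval Y aY chi 0 (scons d eY) (fun _ => d)) in Hd;
    [| exact Hf | intros [|j] Hj; simpl; auto; lia | intros; reflexivity].
  exact Hd.
Qed.

Lemma main_lemma {L} (X Y : structure L) (satX : aleph0_saturated X) (satY : aleph0_saturated Y)
  (phi : formula L Empty_set) : forall n eX eY, fv_below n phi -> equivn X Y n eX eY ->
  eval X (no_params X) eX phi = eval Y (no_params Y) eY phi.
Proof.
  induction phi as [| s t | r args | p IHp q IHq | c p IHp | p IHp | p IHp | p IHp q IHq | p IHp q IHq];
    intros n eX eY Hfv H.
  - reflexivity.
  - apply H; simpl; auto.
  - apply H; simpl; auto.
  - simpl in *. destruct Hfv. f_equal; eauto.
  - simpl in *. f_equal; eauto.
  - simpl in *. unfold Rsup; f_equal; apply Lub_Rbar_eqset; intro v; split.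
    + intros [c ->]. destruct (step X Y satY n eX eY H c) as [d Hd]. exists d. eauto.
    + intros [d ->]. destruct (step Y X satX n eY eX (equivn_sym _ _ _ _ _ H) d) as [c Hc].
      exists c. symmetry. apply (IHp (S n)); auto. apply equivn_sym; auto.
  - simpl in *. unfold Rinf; f_equal; apply Glb_Rbar_eqset; intro v; split.
    + intros [c ->]. destruct (step X Y satY n eX eY H c) as [d Hd]. exists d. eauto.
    + intros [d ->]. destruct (step Y X satX n eY eX (equivn_sym _ _ _ _ _ H) d) as [c Hc].
      exists c. symmetry. apply (IHp (S n)); auto. apply equivn_sym; auto.
  - simpl in *. destruct Hfv. f_equal; eauto.
  - simpl in *. destruct Hfv. f_equal; eauto.
Qed.

Theorem mainTheorem12 (L : language) (M N : structure L) :
  affine_equiv M N -> aleph0_saturated M -> aleph0_saturated N -> CL_equiv M N.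
Proof.
  intros Haff satM satN s Hs eM eN.
  apply (main_lemma M N satM satN s 0); auto.
  intros chi A F. apply Haff; auto.
Qed.
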